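(* Let $\Bbbk$ be a unital ring and $n,r$ positive integers. Then $\Phi_{n,r}:\Bbbk W_n\to\operatorname{End}_\Bbbk(\mathbf V^{\otimes r})$ is faithful when $n-1\le r$, and $\Phi_{n,r+1/2}:\Bbbk W_{n-1}\to\operatorname{End}_\Bbbk(\mathbf V^{\otimes r}\otimes\mathbf v_n)$ is faithful when $n-2\le r$.
   Context: $\mathbf V$ is a free $\Bbbk$-module with basis $\mathbf v_1,\dots,\mathbf v_n$. $W_n$ is the symmetric group on $\{1,\dots,n\}$ acting on $\mathbf V^{\otimes r}$ by $w(\mathbf v_{j_1}\otimes\cdots\otimes\mathbf v_{j_r})=\mathbf v_{w(j_1)}\otimes\cdots\otimes\mathbf v_{w(j_r)}$ extended linearly; $\Phi_{n,r}$ is the resulting representation. $W_{n-1}=\{w\in W_n:w(n)=n\}$ preserves $\mathbf V^{\otimes r}\otimes\mathbf v_n\subset\mathbf V^{\otimes(r+1)}$, and $\Phi_{n,r+1/2}$ is the resulting representation. *)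

(* Defs.v *)
From HB Require Import structures.
From mathcomp Require Import all_boot all_order all_algebra all_fingroup.
Set Implicit Arguments. Unset Strict Implicit. Unset Printing Implicit Defensive.
Import GRing.Theory.
Local Open Scope ring_scope.

(* Basis of V^{(x) r}: v_{j 0} (x) ... (x) v_{j (r-1)}, indexed by j : 'I_r -> 'I_n. *)
Definition tens (n r : nat) := {ffun 'I_r -> 'I_n}.

Definition act (n r : nat) (w : {perm 'I_n}) (j : tens n r) : tens n r :=
  [ffun k => w (j k)].

(* An element a = \sum_w a_w w of the group ring k W_n, given by its coefficients. *)
(* Phi_{n,r}(a) as a k-endomorphism of V^{(x) r}, recorded on the basis:
   Phi a j i = coefficient of basis vector i in Phi(a)(basis vector j)
             = \sum_{w | w . j = i} a_w. *)
Definition Phi (R : pzRingType) (n r : nat) (a : {ffun {perm 'I_n} -> R})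
  : {ffun tens n r -> {ffun tens n r -> R}} :=
  [ffun j => [ffun i => \sum_(w : {perm 'I_n} | act w j == i) a w]].

Definition vlast (n : nat) (hn : (0 < n)%N) : 'I_n :=
  Ordinal (etrans (ltn_predL n) hn).

(* basis of V^{(x) r} (x) v_n inside V^{(x) (r+1)} *)
Definition ext (n r : nat) (vn : 'I_n) (j : tens n r) : tens n r.+1 :=
  [ffun k : 'I_r.+1 => if unlift ord_max k is Some k' then j k' else vn].

(* Phi_{n,r+1/2}(a): restriction of Phi_{n,r+1}(a) to V^{(x) r} (x) v_n,
   recorded on the basis (ext j)_j of that subspace. *)
Definition PhiHalf (R : pzRingType) (n r : nat) (hn : (0 < n)%N)
  (a : {ffun {perm 'I_n} -> R}) : {ffun tens n r -> {ffun tens n r -> R}} :=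
  [ffun j => [ffun i => Phi r.+1 a (ext (vlast hn) j) (ext (vlast hn) i)]].

(* the group ring k W_{n-1}, W_{n-1} = stabilizer of n, as a subset of k W_n *)
Definition in_kWn1 (R : pzRingType) (n : nat) (hn : (0 < n)%N)
  (a : {ffun {perm 'I_n} -> R}) : Prop :=
  forall w : {perm 'I_n}, w (vlast hn) != vlast hn -> a w = 0.

(* Main.v *)
Require Import Defs.
From mathcomp Require Import all_boot all_order all_algebra all_fingroup.
From mathcomp Require Import zify.
Local Open Scope ring_scope.

Lemma key_act (n m : nat) (J : tens n m) (y0 : 'I_n)
  (hJ : forall x, x != y0 -> exists k, J k = x) (w w' : {perm 'I_n}) :
  Defs.act w J = Defs.act w' J -> w = w'.
Proof.
move=> E.
have agree : forall x, x != y0 -> w x = w' x.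
  move=> x /hJ [k <-]; move/ffunP: E => /(_ k); by rewrite !ffunE.
apply/permP => x; case: (eqVneq x y0) => [->|/agree//].
set z := (w^-1)%g (w' y0).
have wz : w z = w' y0 by rewrite /z permKV.
case: (eqVneq z y0) => [zy| nz]; first by rewrite -{1}zy wz.
have := agree _ nz; rewrite wz => /perm_inj zy; by rewrite zy eqxx in nz.
Qed.

Lemma sum_single (R : pzRingType) (n m : nat) (J : tens n m) (y0 : 'I_n)
  (hJ : forall x, x != y0 -> exists k, J k = x) (w : {perm 'I_n})
  (a : {ffun {perm 'I_n} -> R}) :
  \sum_(w' : {perm 'I_n} | Defs.act w' J == Defs.act w J) a w' = a w.
Proof.
apply: (big_pred1 w) => w' /=; apply/eqP/eqP => [/(@key_act _ _ _ _ hJ)|->] //.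
Qed.

Lemma arith2 (n r x : nat) : (0 < n)%N -> (n - 2 <= r)%N -> (x < n)%N ->
  x != (if (n - 2 < n)%N then (n - 2)%N else n.-1) -> x != n.-1 -> (x < r)%N.
Proof. move=> h1 h2 h3; case: ltnP => h4; lia. Qed.

Theorem corollary4p13 (R : pzRingType) (n r : nat) (hn : (0 < n)%N) (hr : (0 < r)%N) :
  ((n - 1 <= r)%N ->
     forall a b : {ffun {perm 'I_n} -> R}, Phi r a = Phi r b -> a = b) /\
  ((n - 2 <= r)%N ->
     forall a b : {ffun {perm 'I_n} -> R}, in_kWn1 hn a -> in_kWn1 hn b ->
       PhiHalf r hn a = PhiHalf r hn b -> a = b).
Proof.
set J : tens n r := [ffun k : 'I_r => insubd (vlast hn) (val k)].
have Jx : forall x : 'I_n, forall h : (nat_of_ord x < r)%N, J (Ordinal h) = x.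
  move=> x h; apply: val_inj; by rewrite /J ffunE val_insubd /= ltn_ord.
split.
- move=> hr1 a b E; apply/ffunP => w.
  have hJ : forall x, x != vlast hn -> exists k, J k = x.
    move=> x nx.
    have hx : (nat_of_ord x < r)%N.
      have : nat_of_ord x != n.-1 by [].
      have := ltn_ord x; move: hr1; lia.
    by exists (Ordinal hx); apply: Jx.
  have := congr1 (fun F : {ffun tens n r -> {ffun tens n r -> R}} => F J (Defs.act w J)) E; rewrite !ffunE.
  by rewrite !(@sum_single _ _ _ _ _ hJ).
- move=> hr2 a b Ha Hb E; apply/ffunP => w.
  case: (eqVneq (w (vlast hn)) (vlast hn)) => [fw|nw]; last first.
    by rewrite (Ha _ nw) (Hb _ nw).
  set y0 : 'I_n := insubd (vlast hn) (n - 2)%N.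
  have hJ : forall x, x != y0 -> exists k, ext (vlast hn) J k = x.
    move=> x nx; case: (eqVneq x (vlast hn)) => [->|nv].
      by exists ord_max; rewrite ffunE unlift_none.
    have hx : (nat_of_ord x < r)%N.
      have : nat_of_ord x != n.-1 by [].
      have : nat_of_ord x != nat_of_ord y0 by [].
      rewrite /y0 val_insubd /=.
      move=> h1 h2; exact: (arith2 _ _ _ hn hr2 (ltn_ord x) h1 h2).
    exists (lift ord_max (Ordinal hx)); by rewrite ffunE liftK Jx.
  have ea : ext (vlast hn) (Defs.act w J) = Defs.act w (ext (vlast hn) J).
    apply/ffunP => k; rewrite !ffunE; case: unlift => [k'|]; by rewrite ?ffunE.
  have := congr1 (fun F : {ffun tens n r -> {ffun tens n r -> R}} => F J (Defs.act w J)) E; rewrite !ffunE ea.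
  by rewrite !(@sum_single _ _ _ _ _ hJ).
Qed.
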